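(* Let $\mathcal{P}_1\subseteq\mathcal{P}_2\subseteq\mathbb{Z}_{\geq0}$ with $0\in\mathcal{P}_1$ and $\mathcal{P}_1-2\neq\emptyset$. Then $\tau_{\mathcal{P}_1}\geq\tau_{\mathcal{P}_2}$.
   Context: For $\mathcal{P}\subseteq\mathbb{Z}_{\ge0}$, $e_\mathcal{P}(z)=\sum_{n\in\mathcal{P}}z^n/n!$ and $\mathcal{P}-2=\{n-2:n\in\mathcal{P},n\ge2\}$. When $0\in\mathcal{P}$ and $\mathcal{P}-2\ne\emptyset$, $\tau_\mathcal{P}$ denotes the unique $\tau\in\mathbb{R}_{>0}$ with $e_\mathcal{P}(\tau)-\tau e_\mathcal{P}'(\tau)=0$. *)

(* Defs.v *)
From Stdlib Require Import Reals Factorial.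
From Coquelicot Require Import Coquelicot.
Open Scope R_scope.

(* A subset P of Z_{>=0} is represented by its characteristic function nat -> bool. *)

Definition eP_coef (P : nat -> bool) (n : nat) : R :=
  if P n then / INR (Factorial.fact n) else 0.

(* e_P(z) = sum_{n in P} z^n / n!  (power series, converges on all of R) *)
Definition eP (P : nat -> bool) (z : R) : R := PSeries (eP_coef P) z.

Definition minus2_nonempty (P : nat -> bool) : Prop :=
  exists n : nat, P n = true /\ (2 <= n)%nat.

Definition is_tau (P : nat -> bool) (t : R) : Prop :=
  0 < t /\ eP P t - t * Derive (eP P) t = 0.

(* Main.v *)
Require Import Defs.
From Stdlib Require Import Reals.
From Coquelicot Require Import Coquelicot.
From Stdlib Require Import Lra Lia Factorial.
Open Scope R_scope.

Lemma coef_bound (P : nat -> bool) n : 0 <= eP_coef P n <= / INR (fact n).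
Proof.
  assert (0 < / INR (fact n)) by (apply Rinv_0_lt_compat, lt_0_INR, lt_O_fact).
  unfold eP_coef; destruct (P n); lra.
Qed.

Lemma rad (P : nat -> bool) x : Rbar_lt (Rabs x) (CV_radius (eP_coef P)).
Proof.
  assert (Hr : 0 < Rabs x + 1) by (pose proof (Rabs_pos x); lra).
  set (r := mkposreal _ Hr).
  assert (Hle : Rbar_le r (CV_radius (eP_coef P))).
  { apply CV_radius_Reals_1.
    destruct (exist_exp r) as [l Hl].
    exists (fun k => / INR (fact k) * r ^ k). exists l. split.
    - intros eps He. destruct (Hl eps He) as [N HN]. exists N. intros n Hn.
      rewrite (sum_eq _ (fun k => / INR (fact k) * r ^ k)). apply HN; auto.
      intros i _. apply Rabs_pos_eq. apply Rmult_le_pos.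
      left; apply Rinv_0_lt_compat, lt_0_INR, lt_O_fact.
      apply pow_le. simpl; lra.
    - intros n y Hy. unfold Boule in Hy. rewrite Rminus_0_r in Hy.
      rewrite Rabs_mult, <- RPow_abs.
      destruct (coef_bound P n) as [A B].
      rewrite (Rabs_pos_eq _ A). apply Rmult_le_compat; auto.
      apply pow_le, Rabs_pos. apply pow_incr. split. apply Rabs_pos. left; exact Hy. }
  eapply Rbar_lt_le_trans; [|exact Hle]. simpl. lra.
Qed.

Definition g (P : nat -> bool) n := eP_coef P n - INR n * eP_coef P n.

Lemma exg (P : nat -> bool) t : ex_series (fun k => g P k * t ^ k).
Proof.
  apply ex_series_Rabs.
  assert (H : Rbar_lt (Rabs t) (CV_radius (g P))).
  { assert (E : forall n, g P n = PS_plus (eP_coef P) (PS_opp (PS_incr_1 (PS_derive (eP_coef P)))) n).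
    { intros [|n]; unfold g, PS_plus, PS_opp, PS_incr_1, PS_derive, plus, opp, zero; simpl; ring. }
    rewrite (CV_radius_ext _ _ E).
    eapply Rbar_lt_le_trans; [|apply CV_radius_plus].
    rewrite CV_radius_opp, CV_radius_incr_1, CV_radius_derive.
    generalize (rad P t). destruct (CV_radius (eP_coef P)); simpl; auto.
    rewrite Rmin_left; lra. }
  exact (CV_disk_inside _ _ H).
Qed.

Lemma fP (P : nat -> bool) t :
  eP P t - t * Derive (eP P) t = Series (fun k => g P k * t ^ k).
Proof.
  unfold eP. rewrite Derive_PSeries by apply rad.
  rewrite <- PSeries_incr_1.
  rewrite <- PSeries_minus.
  - unfold PSeries. apply Series_ext. intros [|n];
    unfold g, PS_minus, PS_incr_1, PS_derive, plus, opp, zero; simpl; ring.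
  - apply CV_radius_inside, rad.
  - apply ex_pseries_incr_1, ex_pseries_derive, rad.
Qed.

Lemma pow_lt_strict x y n : 0 <= x < y -> (n <> 0)%nat -> x ^ n < y ^ n.
Proof.
  intros [Hx Hxy] Hn. destruct n as [|m]; [lia|]. simpl.
  assert (0 < y ^ m) by (apply pow_lt; lra).
  apply Rle_lt_trans with (x * y ^ m).
  - apply Rmult_le_compat_l; auto. apply pow_incr; lra.
  - apply Rmult_lt_compat_r; auto.
Qed.

Theorem lemma7p4 (P1 P2 : nat -> bool)
  (Hsub : forall n, P1 n = true -> P2 n = true)
  (H0 : P1 0%nat = true)
  (H2 : minus2_nonempty P1)
  (t1 t2 : R) (Ht1 : is_tau P1 t1) (Ht2 : is_tau P2 t2) :
  t1 >= t2.
Proof.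
  destruct Ht1 as [Hp1 E1]. destruct Ht2 as [Hp2 E2].
  rewrite fP in E1, E2.
  apply Rnot_lt_ge. intros Hlt.
  set (d := fun k => g P1 k * t1 ^ k - g P2 k * t2 ^ k).
  assert (Hd : Series d = 0).
  { unfold d. rewrite Series_minus by apply exg. lra. }
  assert (Hfact : forall n, 0 < / INR (fact n))
    by (intros; apply Rinv_0_lt_compat, lt_0_INR, lt_O_fact).
  assert (Hnn : forall n, 0 <= d n).
  { intros [|[|n]]; unfold d, g, eP_coef.
    - rewrite H0, (Hsub _ H0). simpl. lra.
    - simpl. lra.
    - assert (HI : 2 <= INR (S (S n))) by (rewrite !S_INR; pose proof (pos_INR n); lra).
      destruct (P1 (S (S n))) eqn:HP.
      + rewrite (Hsub _ HP).
        assert (t1 ^ S (S n) <= t2 ^ S (S n)) by (apply pow_incr; lra).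
        set (a := / INR (fact (S (S n)))) in *. set (I := INR (S (S n))) in *.
        replace ((a - I * a) * t1 ^ S (S n) - (a - I * a) * t2 ^ S (S n))
          with ((I - 1) * a * (t2 ^ S (S n) - t1 ^ S (S n))) by ring.
        apply Rmult_le_pos; [apply Rmult_le_pos|]; try lra.
        unfold a; left; apply Hfact.
      + assert (0 <= t2 ^ S (S n)) by (apply pow_le; lra).
        assert (0 <= (if P2 (S (S n)) then / INR (fact (S (S n))) else 0))
          by (destruct (P2 (S (S n))); [left; apply Hfact | lra]).
        set (a := (if P2 (S (S n)) then / INR (fact (S (S n))) else 0)) in *.
        set (I := INR (S (S n))) in *.
        replace ((0 - I * 0) * t1 ^ S (S n) - (a - I * a) * t2 ^ S (S n))
          with ((I - 1) * a * t2 ^ S (S n)) by ring.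
        apply Rmult_le_pos; [apply Rmult_le_pos|]; lra. }
  destruct H2 as [n0 [HP0 Hn0]].
  assert (Hpos : 0 < d n0).
  { unfold d, g, eP_coef. rewrite HP0, (Hsub _ HP0).
    assert (HI : 2 <= INR n0) by (apply (le_INR 2) in Hn0; simpl in Hn0; lra).
    assert (t1 ^ n0 < t2 ^ n0) by (apply pow_lt_strict; [split; lra | lia]).
    specialize (Hfact n0).
    set (a := / INR (fact n0)) in *. set (I := INR n0) in *.
    replace ((a - I * a) * t1 ^ n0 - (a - I * a) * t2 ^ n0)
      with ((I - 1) * a * (t2 ^ n0 - t1 ^ n0)) by ring.
    apply Rmult_lt_0_compat; [apply Rmult_lt_0_compat|]; lra. }
  assert (Hex : ex_series d) by (apply (ex_series_minus (fun k => g P1 k * t1 ^ k)); apply exg).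
  rewrite (Series_incr_n d (S n0)) in Hd by (lia || exact Hex).
  simpl Init.Nat.pred in Hd.
  assert (Htail : 0 <= Series (fun k => d (S n0 + k)%nat)).
  { apply Rle_trans with (Series (fun k => 0 * d k)).
    - rewrite Series_scal_l. lra.
    - apply Series_le. intros k. rewrite Rmult_0_l. split; [lra | apply Hnn].
      apply (ex_series_incr_n d (S n0)). exact Hex. }
  destruct n0 as [|m]; [lia|].
  simpl sum_f_R0 in Hd.
  assert (0 <= sum_f_R0 d m) by (apply cond_pos_sum; exact Hnn).
  lra.
Qed.
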